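(* Let $(V,\langle\cdot\,,\cdot\rangle_V)$ be an admissible $\mathrm{Cl}_{r,1}$-module and $J_i=J_{z_i}$, $i=1,\ldots,r+1$, the representations of orthonormal generators $z_1,\ldots,z_{r+1}$ of $\mathrm{Cl}_{r,1}$, so $J_i^2=-\mathrm{Id}_V$ for $i\le r$ and $J_{r+1}^2=\mathrm{Id}_V$. Let $U\subset V$ be a subspace invariant under $J_1,\ldots,J_r$ with a basis $u_1,\ldots,u_l$ such that $\{u_\alpha\}$ is orthonormal, each $J_i$ ($i=1,\ldots,r$) permutes $\{u_\alpha\}$ up to sign, and $\langle J_iu_\alpha,u_\beta\rangle_V\in\{1,-1,0\}$ for all $i\le r$ and all $\alpha,\beta$. Put $\tilde u_\alpha=J_{r+1}u_\alpha$, $\widetilde U=\mathrm{span}\{\tilde u_1,\ldots,\tilde u_l\}$ and $W=\mathrm{span}\{u_1,\ldots,u_l,\tilde u_1,\ldots,\tilde u_l\}$. If the decomposition $W=U\oplus\widetilde U$ is orthogonal with respect to $\langle\cdot\,,\cdot\rangle_V$, then $(W,\langle\cdot\,,\cdot\rangle_W)$, where $\langle\cdot\,,\cdot\rangle_W$ is the restriction of $\langle\cdot\,,\cdot\rangle_V$ to $W$, is an admissible integral $\mathrm{Cl}_{r,1}$-module. If $U$ has minimal dimension, then $W$ is an admissible integral $\mathrm{Cl}_{r,1}$-module of minimal dimension.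
   Context: A scalar product is a real symmetric non-degenerate bilinear form; a set $\{u_\alpha\}$ is orthonormal if $\langle u_\alpha,u_\beta\rangle=0$ for $\alpha\neq\beta$ and $\langle u_\alpha,u_\alpha\rangle=\pm1$. $\mathrm{Cl}_{r,s}$ is the Clifford algebra generated by $\mathbb R^{r,s}$ ($\mathbb R^{r+s}$ with quadratic form $x_1^2+\dots+x_r^2-x_{r+1}^2-\dots-x_{r+s}^2$) with $z^2=-\langle z,z\rangle\cdot1$. A module $V$ with representation $J$ is admissible if it carries a scalar product with $\langle J_zu,v\rangle_V=-\langle u,J_zv\rangle_V$. An admissible integral module is an admissible module having an orthonormal basis $\{v_\alpha\}$ with $\langle J_{z_k}v_\alpha,v_\beta\rangle\in\{1,-1,0\}$ for all orthonormal generators $z_k$ and all $\alpha,\beta$. An operator permutes a basis up to sign if it sends each basis vector to $\pm$ some basis vector. ''Minimal dimension'' for $U$ refers to the minimal dimension of an admissible $\mathrm{Cl}_{r,0}$-module (here $U$ with $J_1,\dots,J_r$), and for $W$ to minimal dimension among admissible $\mathrm{Cl}_{r,1}$-modules. *)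

(* Defs.v *)
(* Vectors of V = R^n are row vectors
   'rV[R]_n, a linear map J acts by v |-> v *m J, subspaces are row spaces
   of matrices (mxalgebra, scope %MS). *)
From HB Require Import structures.
From mathcomp Require Import all_boot all_order all_algebra.
From mathcomp Require Import reals.
Set Implicit Arguments. Unset Strict Implicit. Unset Printing Implicit Defensive.
Import Order.TTheory GRing.Theory Num.Theory.
Local Open Scope ring_scope.

Section Defs.
Variable R : realType.

Definition bform (n : nat) (G : 'M[R]_n) (x y : 'rV[R]_n) : R :=
  (x *m G *m y^T) 0 0.

Definition scalar_product (n : nat) (G : 'M[R]_n) : Prop :=
  G^T = G /\ G \in unitmx.

Definition cl_norm (r s : nat) (i : 'I_(r + s)) : R :=
  if (i < r)%N then 1 else -1.

(* J represents the is_orthonormal generators z_1..z_{r+s} of Cl_{r,s}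
   (z^2 = -<z,z>): J_i J_j + J_j J_i = -2 <z_i,z_j> Id. *)
Definition clifford_rep (r s n : nat) (J : 'I_(r + s) -> 'M[R]_n) : Prop :=
  forall i j : 'I_(r + s),
    J i *m J j + J j *m J i = (if i == j then - (2 * cl_norm i) else 0)%:M.

Definition admissible (r s n : nat) (G : 'M[R]_n)
    (J : 'I_(r + s) -> 'M[R]_n) : Prop :=
  [/\ scalar_product G, clifford_rep J &
      forall (i : 'I_(r + s)) (x y : 'rV[R]_n),
        bform G (x *m J i) y = - bform G x (y *m J i)].

Definition has_admissible_module (r s d : nat) : Prop :=
  exists (G : 'M[R]_d) (J : 'I_(r + s) -> 'M[R]_d), admissible G J.

Definition min_admissible_dim (r s d : nat) : Prop :=
  [/\ (0 < d)%N, has_admissible_module r s d &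
      forall d', (0 < d')%N -> has_admissible_module r s d' -> (d <= d')%N].

Definition is_orthonormal (n m : nat) (G : 'M[R]_n) (u : 'I_m -> 'rV[R]_n)
  : Prop :=
  (forall a b : 'I_m, a != b -> bform G (u a) (u b) = 0) /\
  (forall a : 'I_m, bform G (u a) (u a) = 1 \/ bform G (u a) (u a) = -1).

Definition in_pm1_0 (x : R) : Prop := x = 1 \/ x = -1 \/ x = 0.

Definition admissible_integral_submodule (r s n m : nat) (G : 'M[R]_n)
    (J : 'I_(r + s) -> 'M[R]_n) (W : 'M[R]_(m, n)) : Prop :=
  [/\
      forall i, (W *m J i <= W)%MS,
      (* the restriction <.,.>_W is a scalar product (non-degenerate;
         symmetry and bilinearity are inherited) *)
      (forall x : 'rV[R]_n, (x <= W)%MS ->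
         (forall y : 'rV[R]_n, (y <= W)%MS -> bform G x y = 0) -> x = 0),
      (forall i (x y : 'rV[R]_n), (x <= W)%MS -> (y <= W)%MS ->
         bform G (x *m J i) y = - bform G x (y *m J i)) &
      exists w : 'I_(\rank W) -> 'rV[R]_n,
        [/\ forall a, (w a <= W)%MS,
            row_free (\matrix_(a < \rank W) w a),
            is_orthonormal G w &
            forall i a b, in_pm1_0 (bform G (w a *m J i) (w b))]].

End Defs.

Definition gen (r : nat) (i : 'I_r) : 'I_(r + 1) := lshift 1 i.
Definition lastgen (r : nat) : 'I_(r + 1) :=
  Ordinal (eq_leq (esym (addn1 r)) : (r < r + 1)%N).

(* Main.v *)
Require Import Defs.
From HB Require Import structures.
From mathcomp Require Import all_boot all_order all_algebra.
From mathcomp Require Import reals complex.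
From mathcomp Require Import zify.
Set Implicit Arguments. Unset Strict Implicit. Unset Printing Implicit Defensive.
Import Order.TTheory GRing.Theory Num.Theory.
Local Open Scope ring_scope.

Lemma oppmx00 (R : realType) (A : 'M[R]_1) : (- A) 0 0 = - A 0 0.
Proof. by rewrite mxE. Qed.

Lemma entry_deltaE (R : realType) (d : nat) (M : 'M[R]_d) i j :
  (delta_mx (0:'I_1) i *m M *m (delta_mx (0 : 'I_1) j)^T) 0 0 = M i j.
Proof.
by rewrite trmx_delta -rowE -colE !mxE.
Qed.

Lemma mx_ext_form (R : realType) (d : nat) (M N : 'M[R]_d) :
  (forall x y : 'rV[R]_d, (x *m M *m y^T) 0 0 = (x *m N *m y^T) 0 0) -> M = N.
Proof.
move=> H; apply/matrixP => i j.
by rewrite -entry_deltaE H entry_deltaE.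
Qed.

Lemma skew_mx (R : realType) (s r d : nat) (G : 'M[R]_d) (J : 'I_(r + s) -> 'M[R]_d) :
  admissible G J -> forall i, J i *m G = - (G *m (J i)^T).
Proof.
case=> _ _ H i; apply: mx_ext_form => x y.
have := H i x y; rewrite /bform !mulmxA => ->.
by rewrite trmx_mul !mulmxA mulmxN mulNmx oppmx00 !mulmxA.
Qed.

Lemma bform_skew (R : realType) (d : nat) (G K : 'M[R]_d) :
  K *m G = - (G *m K^T) -> forall x y, bform G (x *m K) y = - bform G x (y *m K).
Proof.
move=> H x y; rewrite /bform -(mulmxA x K) H trmx_mul.
by rewrite mulmxN mulNmx oppmx00 !mulmxA.
Qed.

Lemma cliff_sq (R : realType) (r s d : nat) (J : 'I_(r + s) -> 'M[R]_d) :
  clifford_rep J -> forall i, J i *m J i = (- cl_norm R i)%:M.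
Proof.
move=> H i; have := H i i; rewrite eqxx => E.
have E2 : (2:R) *: (J i *m J i) = (2:R) *: (- cl_norm R i)%:M.
  by rewrite scale_scalar_mx mulrN -E scaler_nat mulr2n.
by move/scalerI: E2; apply; rewrite pnatr_eq0.
Qed.

Lemma cliff_anti (R : realType) (r s d : nat) (J : 'I_(r + s) -> 'M[R]_d) :
  clifford_rep J -> forall i j, i != j -> J i *m J j = - (J j *m J i).
Proof.
move=> H i j ij; have := H i j; rewrite (negbTE ij) => E.
by apply/eqP; rewrite -addr_eq0 E; apply/eqP/matrixP=> a b; rewrite !mxE mul0rn.
Qed.

Definition avg (R : realType) (d : nat) (Ks : seq 'M[R]_d) : 'M[R]_d :=
  foldr (fun K g => g + K *m g *m K^T) 1%:M Ks.

Lemma avg_sym (R : realType) (d : nat) (Ks : seq 'M[R]_d) : (avg Ks)^T = avg Ks.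
Proof.
elim: Ks => [|K Ks IH] /=; first by rewrite tr_scalar_mx.
by rewrite linearD /= !trmx_mul trmxK IH mulmxA.
Qed.

Fixpoint anticomm_all (R : realType) (d : nat) (Ks : seq 'M[R]_d) : Prop :=
  match Ks with
  | [::] => True
  | K :: Ks' => (forall K', K' \in Ks' -> K' *m K = - (K *m K')) /\ anticomm_all Ks'
  end.

Lemma avg_inv (R : realType) (d : nat) (Ks : seq 'M[R]_d) :
  anticomm_all Ks ->
  (forall K, K \in Ks -> exists c : R, K *m K = c%:M /\ c * c = 1) ->
  forall K, K \in Ks -> K *m avg Ks *m K^T = avg Ks.
Proof.
elim: Ks => [|K0 Ks IH] //= [AC ACs] Hsq K.
have IH' := IH ACs (fun K1 HK => Hsq K1 ltac:(by rewrite inE HK orbT)).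
rewrite inE; case: (boolP (K \in Ks)) => [KK _|KK]; last first.
  rewrite orbF => /eqP ->.
  have [c [Hc c2]] := Hsq K0 (mem_head _ _).
  rewrite mulmxDr mulmxDl addrC; congr (_ + _).
  rewrite !mulmxA Hc -mulmxA -trmx_mul Hc tr_scalar_mx mul_mx_scalar.
  by rewrite mul_scalar_mx scalerA c2 scale1r.
rewrite mulmxDr mulmxDl IH' //; congr (_ + _).
have E : K *m K0 = - (K0 *m K) := AC K KK.
rewrite !mulmxA E mulNmx -!mulmxA -trmx_mul E.
rewrite linearN /= mulmxN mulNmx opprK trmx_mul !mulmxA.
by rewrite -(mulmxA K0 K) -(mulmxA K0 (K *m avg Ks)) IH' // mulmxA.
Qed.

Definition cq (R : realType) (d : nat) (g : 'M[R]_d) (v : 'rV[R[i]]_d) : R[i] :=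
  (v *m map_mx (real_complex R) g *m (map_mx Num.conj v)^T) 0 0.

Lemma conj_mapC (R : realType) m k (K : 'M[R]_(m, k)) :
  map_mx Num.conj (map_mx (real_complex R) K) = map_mx (real_complex R) K.
Proof. by apply/matrixP=> a b; rewrite !mxE; exact: conjc_real. Qed.

Lemma cq1_ge0 (R : realType) (d : nat) (v : 'rV[R[i]]_d) :
  0 <= cq 1%:M v /\ (v != 0 -> 0 < cq 1%:M v).
Proof.
have E : cq 1%:M v = \sum_j v 0 j * (v 0 j)^*.
  rewrite /cq map_scalar_mx /= rmorph1 mulmx1 mxE.
  by apply: eq_bigr => j _; rewrite !mxE.
rewrite E; split; first by apply: sumr_ge0 => j _; exact: mul_conjC_ge0.
move=> vn0; rewrite lt_def; apply/andP; split; last by apply: sumr_ge0 => j _; exact: mul_conjC_ge0.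
apply/negP => /eqP /psumr_eq0P H.
have : v = 0.
  apply/rowP => j; rewrite mxE; apply/eqP; rewrite -mul_conjC_eq0; apply/eqP.
  by apply: H => // k _; exact: mul_conjC_ge0.
by move/eqP: vn0.
Qed.

Lemma cq_avg (R : realType) (d : nat) (Ks : seq 'M[R]_d) (v : 'rV[R[i]]_d) :
  0 <= cq (avg Ks) v /\ (v != 0 -> 0 < cq (avg Ks) v).
Proof.
elim: Ks v => [|K Ks IH] v /=; first exact: cq1_ge0.
have E : cq (avg Ks + K *m avg Ks *m K^T) v =
    cq (avg Ks) v + cq (avg Ks) (v *m map_mx (real_complex R) K).
  rewrite /cq rmorphD /= mulmxDr mulmxDl mxE; congr (_ + _).
  rewrite !map_mxM /= -(map_trmx (real_complex R)) conj_mapC trmx_mul.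
  by rewrite !mulmxA.
rewrite E; have [a1 a2] := IH v; have [b1 _] := IH (v *m map_mx (real_complex R) K).
split; first exact: addr_ge0.
by move=> vn0; apply: lt_le_trans (a2 vn0) _; rewrite lerDl.
Qed.

Lemma free_of_inj (R : realType) m k (A : 'M[R]_(m, k)) :
  (forall x : 'rV[R]_m, x *m A = 0 -> x = 0) -> row_free A.
Proof.
move=> H; rewrite -kermx_eq0; apply/eqP/row_matrixP => i.
rewrite row0; apply: H; apply/sub_kermxP; exact: row_sub.
Qed.

Lemma avg_pos (R : realType) (d : nat) (Ks : seq 'M[R]_d) (x : 'rV[R]_d) :
  x != 0 -> 0 < (x *m avg Ks *m x^T) 0 0.
Proof.
move=> xn0; set v := map_mx (real_complex R) x.
have vn0 : v != 0 by rewrite map_mx_eq0.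
have := (cq_avg Ks v).2 vn0.
have -> : cq (avg Ks) v = real_complex R ((x *m avg Ks *m x^T) 0 0).
  rewrite /cq /v conj_mapC map_trmx -!map_mxM.
  by rewrite mxE.
by rewrite -(rmorph0 (real_complex R)) ltcR.
Qed.

Lemma pos_unit (R : realType) (d k : nat) (g : 'M[R]_d) (B : 'M[R]_(k, d)) :
  row_free B -> (forall x : 'rV[R]_d, x != 0 -> 0 < (x *m g *m x^T) 0 0) ->
  B *m g *m B^T \in unitmx.
Proof.
move=> fB pos; rewrite -row_free_unit; apply: free_of_inj => x H.
apply/eqP; rewrite -(mulmx_free_eq0 _ fB); apply/negPn/negP => nz.
have H' : x *m B *m g *m B^T = 0 by rewrite !mulmxA in H.
have := pos _ nz; rewrite trmx_mul !mulmxA H' mul0mx mxE ltxx //.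
Qed.

Lemma transport (R : realType) (r s d k : nat) (G : 'M[R]_d)
  (J : 'I_(r + s) -> 'M[R]_d) (B : 'M[R]_(k, d)) :
  row_free B -> (forall i, (B *m J i <= B)%MS) -> clifford_rep J -> G^T = G ->
  (forall i, J i *m G = - (G *m (J i)^T)) -> B *m G *m B^T \in unitmx ->
  has_admissible_module R r s k.
Proof.
move=> fB inv cl sym skew un.
have [J' KJ] : exists J' : 'I_(r + s) -> 'M[R]_k, forall i, J' i *m B = B *m J i.
  by exists (fun i => B *m J i *m pinvmx B) => i; rewrite mulmxKpV.
exists (B *m G *m B^T), J'; split.
- by split => //; rewrite !trmx_mul trmxK sym mulmxA.
- move=> i j; apply: (row_free_inj fB) => /=.
  rewrite mulmxDl -!mulmxA !KJ !mulmxA !KJ -!mulmxA -mulmxDr cl.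
  by rewrite mul_mx_scalar mul_scalar_mx.
- move=> i; apply: bform_skew.
  rewrite !mulmxA KJ -(mulmxA B) skew mulmxN mulNmx; congr (- _).
  by rewrite -(mulmxA _ B^T) -trmx_mul KJ trmx_mul !mulmxA.
Qed.

Lemma real_eig (R : realType) (d : nat) (Ks : seq 'M[R]_d) (G T : 'M[R]_d) :
  (0 < d)%N -> G^T = G -> T *m avg Ks = G -> exists l : R, eigenvalue T l.
Proof.
move=> d0 sym TG.
set f := real_complex R.
have [a ea] := @spectral.eigenvalue_closed (R[i]) d (map_mx f T) d0.
have [v vT vn0] := eigenvalueP ea.
set Gc := map_mx f G; set gc := map_mx f (avg Ks).
have Gcgc : Gc = map_mx f T *m gc by rewrite /Gc -TG map_mxM.
set vb := map_mx Num.conj v.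
set x := (v *m Gc *m vb^T) 0 0.
have xy : x = a * cq (avg Ks) v.
  by rewrite /x Gcgc mulmxA vT -scalemxAl -scalemxAl mxE.
have xr : x \is Num.real.
  rewrite CrealE; apply/eqP.
  have -> : x^* = (map_mx Num.conj (v *m Gc *m vb^T)) 0 0 by rewrite mxE.
  rewrite !map_mxM /= /Gc conj_mapC.
  have -> : map_mx Num.conj vb^T = v^T by apply/matrixP => i j; rewrite !mxE conjCK.
  have GcT : Gc^T = Gc by rewrite /Gc -[in RHS]sym; apply/matrixP=> i j; rewrite !mxE.
  rewrite /x -[in RHS](trmxK (v *m _ *m _)) [in RHS]mxE !trmx_mul trmxK.
  by rewrite GcT mulmxA.
have [y1 y2] := cq_avg Ks v; have yp := y2 vn0.
have ar : a \is Num.real.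
  have -> : a = x / cq (avg Ks) v by rewrite xy mulfK // gt_eqF.
  by rewrite rpredM // rpredV gtr0_real.
exists (complex.Re a).
have ea' : a = f (complex.Re a) by rewrite /f RRe_real.
rewrite eigenvalue_root_char -(fmorph_root f) map_char_poly -eigenvalue_root_char.
by move: ea; rewrite {1}ea'.
Qed.

Lemma gen_neq_last r (i : 'I_r) : gen i != lastgen r.
Proof. by apply/eqP => /(congr1 val) /= E; move: (ltn_ord i); rewrite E ltnn. Qed.

Lemma cl_norm_gen (R : realType) r (i : 'I_r) : cl_norm R (gen i) = 1.
Proof. by rewrite /cl_norm /= ltn_ord. Qed.

Lemma cl_norm_last (R : realType) r : cl_norm R (lastgen r) = -1.
Proof. by rewrite /cl_norm /= ltnn. Qed.

Lemma gen_inj r : injective (@gen r).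
Proof. by move=> i j /(congr1 val) /= E; apply: val_inj. Qed.

Lemma anticomm_map (R : realType) (d r : nat) (A : 'I_r -> 'M[R]_d) (s : seq 'I_r) :
  uniq s -> (forall i j, i != j -> A i *m A j = - (A j *m A i)) ->
  anticomm_all (map A s).
Proof.
move=> + H; elim: s => [|i s IH] //= /andP [ni us]; split; last exact: IH.
move=> K /mapP [j js ->]; apply: H.
by apply: contraNneq ni => <-.
Qed.

Lemma sub_module (R : realType) (r d : nat) (A : 'I_r -> 'M[R]_d) (g0 : 'M[R]_d)
  (L : 'M[R]_d) :
  (forall i, A i *m A i = (-1)%:M) ->
  (forall i j, i != j -> A i *m A j = - (A j *m A i)) ->
  g0^T = g0 -> (forall x : 'rV[R]_d, x != 0 -> 0 < (x *m g0 *m x^T) 0 0) ->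
  (forall i, A i *m g0 = - (g0 *m (A i)^T)) ->
  (forall i, (L *m A i <= L)%MS) ->
  has_admissible_module R r 0 (\rank L).
Proof.
move=> AA AC sym pos skew inv.
pose J0 (k : 'I_(r + 0)) := A (cast_ord (addn0 r) k).
apply: (@transport R r 0 d (\rank L) g0 J0 (row_base L)).
- exact: row_base_free.
- move=> k; rewrite (eqmxMr _ (eq_row_base L)) eq_row_base; exact: inv.
- move=> k1 k2; rewrite /J0 /cl_norm.
  have -> : (k1 < r)%N by have := ltn_ord k1; rewrite [X in (_ < X)%N]addn0.
  case: eqP => [<-|ne].
    by rewrite AA -raddfD /= mulr1 -opprD.
  have ne' : cast_ord (addn0 r) k1 != cast_ord (addn0 r) k2.
    by apply/eqP => /(congr1 val) /= E; apply: ne; exact: val_inj.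
  by rewrite AC // addNr raddf0.
- exact: sym.
- by move=> k; exact: skew.
- apply: pos_unit => //; exact: row_base_free.
Qed.

Lemma one_neq0 (R : realType) (d : nat) : (0 < d)%N -> (1%:M : 'M[R]_d) != 0.
Proof.
move=> d0; apply/negP => /eqP /matrixP /(_ (Ordinal d0) (Ordinal d0)).
by rewrite !mxE eqxx /= => /eqP; rewrite oner_eq0.
Qed.

Lemma lower_bound (R : realType) (r d : nat) (G : 'M[R]_d) (J : 'I_(r + 1) -> 'M[R]_d) :
  (0 < d)%N -> admissible G J ->
  exists k, [/\ (0 < k)%N, (2 * k <= d)%N & has_admissible_module R r 0 k].
Proof.
move=> d0 adm; have [[symG unG] cl _] := adm.
have skew := skew_mx adm.
pose A i := J (gen i); pose P := J (lastgen r).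
have AA i : A i *m A i = (-1)%:M by rewrite /A cliff_sq // cl_norm_gen.
have PP : P *m P = 1%:M by rewrite /P cliff_sq // cl_norm_last opprK.
have AP i : A i *m P = - (P *m A i) by rewrite /A /P cliff_anti // gen_neq_last.
have AC i j : i != j -> A i *m A j = - (A j *m A i).
  move=> ij; rewrite /A cliff_anti //; apply: contra ij => /eqP /gen_inj ->; done.
pose Ks := P :: map A (enum 'I_r).
have Kinv : forall K, K \in Ks -> K *m avg Ks *m K^T = avg Ks.
  apply: avg_inv.
    split; last by apply: anticomm_map => //; exact: enum_uniq.
    by move=> K /mapP [i _ ->]; exact: AP.
  move=> K; rewrite inE => /orP [/eqP ->|/mapP [i _ ->]].
    by exists 1; rewrite PP mulr1.
  by exists (-1); rewrite AA mulrNN mulr1.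
set g0 := avg Ks.
have g0sym : g0^T = g0 by exact: avg_sym.
have g0pos : forall x : 'rV[R]_d, x != 0 -> 0 < (x *m g0 *m x^T) 0 0 by move=> x; exact: avg_pos.
have g0un : g0 \in unitmx.
  have := @pos_unit R d d g0 1%:M; rewrite mul1mx trmx1 mulmx1; apply => //.
  by rewrite row_free_unit unitmx1.
have skewA i : A i *m g0 = - (g0 *m (A i)^T).
  have E : A i *m g0 *m (A i)^T = g0 by apply: Kinv; rewrite inE map_f ?mem_enum ?orbT.
  rewrite -[in RHS]E -!mulmxA -trmx_mul AA tr_scalar_mx mul_mx_scalar.
  by rewrite scaleN1r mulmxN opprK.
have skewP : P *m g0 = g0 *m P^T.
  have E : P *m g0 *m P^T = g0 by apply: Kinv; rewrite mem_head.
  by rewrite -[in RHS]E -!mulmxA -trmx_mul PP trmx1 mulmx1.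
pose T := G *m invmx g0.
have TG : T *m g0 = G by rewrite /T mulmxKV.
have TA i : T *m A i = A i *m T.
  have h : invmx g0 *m A i = - ((A i)^T *m invmx g0).
    rewrite -[LHS]mulmx1 -(mulmxV g0un) mulmxA -(mulmxA _ (A i)) skewA.
    by rewrite mulmxN mulNmx !mulmxA mulVmx // mul1mx.
  by rewrite /T mulmxA skew -mulmxA h mulmxN mulNmx mulmxA.
have [lam elam] := real_eig d0 symG TG.
set E := eigenspace T lam.
have Epos : (0 < \rank E)%N by rewrite lt0n mxrank_eq0.
have Einv i : (E *m A i <= E)%MS by apply: comm_mx_stable_eigenspace; exact: TA.
have [Efull|Enf] := eqVneq (\rank E) d.
  have : (1%:M <= E)%MS by apply: submx_full; rewrite /row_full Efull.
  move/eigenspaceP; rewrite mul1mx => Tl.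
  have Gl : G = lam *: g0 by rewrite -TG Tl -scalemxAl mul1mx.
  have := skew (lastgen r); rewrite -/P Gl -scalemxAr -scalemxAl skewP.
  move/eqP; rewrite -subr_eq0 opprK -scalerDr scaler_eq0 => /orP [/eqP l0|/eqP h].
    move: unG; rewrite Gl l0 scale0r => /mulmxV; rewrite mul0mx => /esym /eqP.
    by rewrite (negbTE (one_neq0 R d0)).
  have : (P *m g0) *m invmx g0 *m P = 0.
    by move: h; rewrite -mulr2n -scaler_nat => /eqP; rewrite scaler_eq0 pnatr_eq0 /= -skewP => /eqP ->; rewrite !mul0mx.
  rewrite mulmxK // PP => /eqP; by rewrite (negbTE (one_neq0 R d0)).
set K := kermx (g0 *m E^T).
have rK : \rank K = (d - \rank E)%N.
  rewrite mxrank_ker -mxrank_tr trmx_mul trmxK g0sym mxrankMfree //.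
  by rewrite row_free_unit.
have KKinv i : (K *m A i <= K)%MS.
  apply/sub_kermxP; rewrite -mulmxA (mulmxA (A i)) skewA mulNmx mulmxN.
  rewrite -(mulmxA g0) -trmx_mul -(mulmxKpV (Einv i)) trmx_mul !mulmxA.
  by rewrite -(mulmxA K) mulmx_ker !mul0mx oppr0.
have rEd : (\rank E <= d)%N by exact: rank_leq_col.
case: (leqP (2 * \rank E) d) => h.
  exists (\rank E); split => //; exact: sub_module AA AC g0sym g0pos skewA Einv.
exists (\rank K); rewrite rK; split.
- by rewrite subn_gt0 ltn_neqAle Enf.
- by move: h rEd; lia.
- by rewrite -rK; exact: sub_module AA AC g0sym g0pos skewA KKinv.
Qed.

Lemma bform_sym (R : realType) (d : nat) (G : 'M[R]_d) x y :
  G^T = G -> bform G x y = bform G y x.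
Proof.
move=> s; rewrite /bform -[in LHS](trmxK (x *m G *m y^T)) [in LHS]mxE.
by rewrite !trmx_mul trmxK s mulmxA.
Qed.

Lemma bformNl (R : realType) (d : nat) (G : 'M[R]_d) x y :
  bform G (- x) y = - bform G x y.
Proof. by rewrite /bform !mulNmx oppmx00. Qed.

Lemma bformNr (R : realType) (d : nat) (G : 'M[R]_d) x y :
  bform G x (- y) = - bform G x y.
Proof. by rewrite /bform linearN /= mulmxN oppmx00. Qed.

Lemma gram_entry (R : realType) (d k : nat) (G : 'M[R]_d) (M : 'M[R]_(k, d)) a b :
  (M *m G *m M^T) a b = bform G (row a M) (row b M).
Proof.
have -> : (M *m G *m M^T) a b = (col b (row a (M *m G *m M^T))) 0 0 by rewrite !mxE.
by rewrite !row_mul colE -mulmxA -colE -tr_row.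
Qed.

Lemma pm_neg (R : realType) (x : R) : in_pm1_0 x -> in_pm1_0 (- x).
Proof.
by case=> [->|[->|->]]; rewrite /in_pm1_0 ?opprK ?oppr0; tauto.
Qed.

Lemma genP r (i : 'I_(r + 1)) : (exists j, i = gen j) \/ i = lastgen r.
Proof.
case: (ltnP i r) => h; [left; exists (Ordinal h) | right]; apply: val_inj => //=.
by apply/eqP; rewrite eqn_leq h -ltnS -(addn1 r) ltn_ord.
Qed.

Theorem theorem5p1 (R : realType) (r n l : nat)
    (G : 'M[R]_n) (J : 'I_(r + 1) -> 'M[R]_n)
    (u : 'I_l -> 'rV[R]_n) :
  admissible G J ->
  let Umx := \matrix_(a < l) u a in
  row_free Umx ->
  (forall i : 'I_r, (Umx *m J (gen i) <= Umx)%MS) ->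
  is_orthonormal G u ->
  (forall (i : 'I_r) (a : 'I_l), exists b : 'I_l,
      u a *m J (gen i) = u b \/ u a *m J (gen i) = - u b) ->
  (forall (i : 'I_r) (a b : 'I_l), in_pm1_0 (bform G (u a *m J (gen i)) (u b))) ->
  let Utmx := \matrix_(a < l) (u a *m J (lastgen r)) in
  let W := (Umx + Utmx)%MS in
  mxdirect (Umx + Utmx) ->
  (forall x y : 'rV[R]_n, (x <= Umx)%MS -> (y <= Utmx)%MS -> bform G x y = 0) ->
  admissible_integral_submodule G J W /\
  (min_admissible_dim R r 0 l ->
     admissible_integral_submodule G J W /\
     min_admissible_dim R r 1 (\rank W)).
Proof.
move=> adm Umx fU Uinv [orth0 orth1] _ integ Utmx W dir ortho.
have [[symG unG] cl skG] := adm.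
set P := J (lastgen r).
have PP : P *m P = 1%:M by rewrite /P cliff_sq // cl_norm_last opprK.
have AP i : J (gen i) *m P = - (P *m J (gen i)) by rewrite /P cliff_anti // gen_neq_last.
have skP x y : bform G (x *m P) y = - bform G x (y *m P) by exact: skG.
have PPb x y : bform G (x *m P) (y *m P) = - bform G x y.
  by rewrite skP -mulmxA PP mulmx1.
have UtE : Utmx = Umx *m P by apply/row_matrixP => a; rewrite row_mul !rowK.
have Pfree : row_free P by rewrite row_free_unit; case: (mulmx1_unit PP).
have rU : \rank Umx = l by apply/eqP.
have rUt : \rank Utmx = l by rewrite UtE mxrankMfree.
have rW : \rank W = (l + l)%N by rewrite /W mxrank_disjoint_sum ?rU ?rUt //; apply/mxdirect_addsP.
have uU b : (u b <= Umx)%MS by rewrite -(rowK u b) row_sub.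
have uPUt b : (u b *m P <= Utmx)%MS by rewrite UtE submxMr.
have UW : (Umx <= W)%MS by exact: addsmxSl.
have UtW : (Utmx <= W)%MS by exact: addsmxSr.
have ortho' x y : (x <= Utmx)%MS -> (y <= Umx)%MS -> bform G x y = 0.
  by move=> hx hy; rewrite bform_sym // ortho.
have uJU i b : (u b *m J (gen i) <= Umx)%MS.
  by apply: submx_trans (Uinv i); apply: submxMr.
have uPJUt i b : (u b *m P *m J (gen i) <= Utmx)%MS.
  have PA : P *m J (gen i) = - (J (gen i) *m P) by rewrite AP opprK.
  rewrite -mulmxA PA mulmxN mulmxA eqmx_opp UtE; apply: submxMr; exact: uJU.
have orth_in a b : in_pm1_0 (bform G (u a) (u b)).
  have [->|ab] := eqVneq a b; last by rewrite orth0 //; right; right.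
  by case: (orth1 b) => ->; [left | right; left].
pose w (a : 'I_(\rank W)) : 'rV[R]_n :=
  match split (cast_ord rW a) with inl b => u b | inr b => u b *m P end.
have z0 : in_pm1_0 (0 : R) by right; right.
have wW a : (w a <= W)%MS.
  by rewrite /w; case: split => b; [apply: submx_trans UW | apply: submx_trans UtW].
have wJ a i : (w a *m J i <= W)%MS.
  case: (genP i) => [[j ->]|->]; rewrite /w; case: split => b.
  - exact: submx_trans (uJU j b) UW.
  - exact: submx_trans (uPJUt j b) UtW.
  - by rewrite -/P; apply: submx_trans (uPUt b) UtW.
  - by rewrite -/P -mulmxA PP mulmx1; apply: submx_trans (uU b) UW.
have worth : is_orthonormal G w.
  split.
    move=> a b ab; rewrite /w.
    case: (splitP (cast_ord rW a)) => [j ej|j ej]; case: (splitP (cast_ord rW b)) => [k ek|k ek].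
    - rewrite orth0 //; apply: contraNneq ab => jk; apply/eqP/val_inj.
      by move: ej ek; rewrite /= jk => -> ->.
    - exact: ortho (uU j) (uPUt k).
    - exact: ortho' (uPUt j) (uU k).
    - rewrite PPb orth0 ?oppr0 //; apply: contraNneq ab => jk; apply/eqP/val_inj.
      by move: ej ek; rewrite /= jk => -> ->.
  move=> a; rewrite /w; case: (splitP (cast_ord rW a)) => [j ej|j ej].
    exact: orth1.
  by rewrite PPb; case: (orth1 j) => ->; rewrite ?opprK; [right|left].
have winteg i a b : in_pm1_0 (bform G (w a *m J i) (w b)).
  have PA j : P *m J (gen j) = - (J (gen j) *m P) by rewrite AP opprK.
  case: (genP i) => [[j ->]|->]; rewrite /w;
    case: (splitP (cast_ord rW a)) => [a' _|a' _]; case: (splitP (cast_ord rW b)) => [b' _|b' _].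
  - exact: integ.
  - by rewrite (ortho _ _ (uJU j a') (uPUt b')).
  - by rewrite (ortho' _ _ (uPJUt j a') (uU b')).
  - by rewrite -mulmxA PA mulmxN mulmxA bformNl skP -mulmxA PP mulmx1 opprK.
  - by rewrite -/P (ortho' _ _ (uPUt a') (uU b')).
  - by rewrite -/P PPb; apply: pm_neg.
  - by rewrite -/P -mulmxA PP mulmx1.
  - by rewrite -/P -mulmxA PP mulmx1 (ortho _ _ (uU a') (uPUt b')).
pose M := \matrix_(a < \rank W) w a.
set D := M *m G *m M^T.
have Dentry a b : D a b = bform G (w a) (w b) by rewrite /D gram_entry !rowK.
have DD : D *m D = 1%:M.
  apply/matrixP => a c; rewrite !mxE (bigD1 a) //= big1 => [|b ba]; last first.
    by rewrite Dentry worth.1 ?mul0r // eq_sym.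
  rewrite addr0; have [<-|ac] := eqVneq a c; last by rewrite (Dentry a c) worth.1 ?mulr0.
  by rewrite Dentry /=; case: (worth.2 a) => ->; rewrite ?mulrNN mulr1.
have Dun : D \in unitmx by case: (mulmx1_unit DD).
have rM : \rank M = \rank W.
  apply/eqP; rewrite eqn_leq rank_leq_row /=.
  rewrite -{1}(mxrank_unit Dun) /D; apply: leq_trans (mxrankM_maxl _ _) _.
  exact: mxrankM_maxl.
have Mfree : row_free M by rewrite /row_free rM.
have MW : (M <= W)%MS by apply/row_subP => a; rewrite rowK.
have WM : (W <= M)%MS by case: (mxrank_leqif_sup MW) => _; rewrite rM eqxx => <-.
have MJ i : (M *m J i <= M)%MS.
  by apply/row_subP => a; rewrite row_mul rowK; apply: submx_trans (wJ a i) WM.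
have part1 : admissible_integral_submodule G J W.
  split.
  - move=> i; apply: submx_trans (submxMr _ WM) _; exact: submx_trans (MJ i) MW.
  - move=> x xW H; have [c xE] := submxP (submx_trans xW WM); rewrite xE in H *.
    have cD : c *m D = 0.
      apply/rowP => b; rewrite [RHS]mxE -(H (w b) (wW b)).
      have -> : (c *m D) 0 b = (col b (c *m D)) 0 0 by rewrite !mxE.
      by rewrite colE /D -!mulmxA -colE -tr_row rowK /bform !mulmxA.
    by rewrite -[c]mulmx1 -(mulmxV Dun) mulmxA cD !mul0mx.
  - by move=> i x y _ _; exact: skG.
  - by exists w; split.
split => //; move=> [l0 _ lmin]; split => //; split.
- by rewrite rW addn_gt0 l0.
- apply: (transport Mfree MJ cl symG (skew_mx adm)); exact: Dun.
- move=> d' d0 [G' [J' adm']].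
  have [k [k0 k2 hk]] := lower_bound d0 adm'.
  by have := lmin k k0 hk; rewrite rW; move: k2; lia.
Qed.
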